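(* For $n\ge2$, the subgroup $\langle\rho_1,\dots,\rho_{n-1}\rangle$ of $TVB_n$ is isomorphic to $S_n$ (via $\rho_i\mapsto(i,i+1)$), and $TVB_n$ is the internal semidirect product $TVB_n=TVP_n\rtimes\langle\rho_1,\dots,\rho_{n-1}\rangle$, where the action on $TVP_n$ by conjugation is given by permutation of indices: for $a\in\langle\rho_1,\dots,\rho_{n-1}\rangle$ with image $\bar a\in S_n$, $a^{-1}\lambda_{ij}a=\lambda_{(i)\bar a,(j)\bar a}$ and $a^{-1}\gamma_i a=\gamma_{(i)\bar a}$.
   Context: For $n\ge 2$, the twisted virtual braid group $TVB_n$ is the group with generators $\sigma_1,\dots,\sigma_{n-1}$, $\rho_1,\dots,\rho_{n-1}$, $\gamma_1,\dots,\gamma_n$ and defining relations: $\sigma_i\sigma_{i+1}\sigma_i=\sigma_{i+1}\sigma_i\sigma_{i+1}$ ($1\le i\le n-2$); $\sigma_i\sigma_j=\sigma_j\sigma_i$ ($|i-j|\ge 2$); $\rho_i^2=1$; $\rho_i\rho_j=\rho_j\rho_i$ ($|i-j|\ge2$); $\rho_i\rho_{i+1}\rho_i=\rho_{i+1}\rho_i\rho_{i+1}$ ($1\le i\le n-2$); $\sigma_i\rho_j=\rho_j\sigma_i$ ($|i-j|\ge 2$); $\rho_i\rho_{i+1}\sigma_i=\sigma_{i+1}\rho_i\rho_{i+1}$ ($1\le i\le n-2$); $\gamma_i^2=1$ and $\gamma_i\gamma_j=\gamma_j\gamma_i$ (all $i,j$); $\gamma_j\rho_i=\rho_i\gamma_j$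 and $\gamma_j\sigma_i=\sigma_i\gamma_j$ for $j\notin\{i,i+1\}$; $\rho_i\gamma_i=\gamma_{i+1}\rho_i$ ($1\le i\le n-1$); $\rho_i\sigma_i\rho_i=\gamma_{i+1}\gamma_i\sigma_i\gamma_i\gamma_{i+1}$ ($1\le i\le n-1$). $\varphi_P:TVB_n\to S_n$ is the homomorphism with $\sigma_i\mapsto(i,i+1)$, $\rho_i\mapsto(i,i+1)$, $\gamma_j\mapsto e$, and $TVP_n=\ker\varphi_P$. In $TVB_n$ define $\lambda_{i,i+1}=\rho_i\sigma_i^{-1}$, $\lambda_{i+1,i}=\rho_i\lambda_{i,i+1}\rho_i$ ($1\le i\le n-1$), and for $1\le i<j-1\le n-1$: $\lambda_{ij}=\rho_{j-1}\cdots\rho_{i+1}\lambda_{i,i+1}\rho_{i+1}\cdots\rho_{j-1}$, $\lambda_{ji}=\rho_{j-1}\cdots\rho_{i+1}\lambda_{i+1,i}\rho_{i+1}\cdots\rho_{j-1}$. Permutations act on the right, $(k)\bar a$ being the image of $k$. *)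

(* Defs.v *)
(* The twisted virtual braid group TVB_n is encoded by its
   presentation: words over the generators and their inverses, modulo the
   congruence generated by free cancellation and the defining relations. *)
From mathcomp Require Import all_boot all_fingroup.
Set Implicit Arguments. Unset Strict Implicit. Unset Printing Implicit Defensive.

(* Generators, with 1-based indices as in the paper:
   Sg i = sigma_i, Rh i = rho_i, Ga j = gamma_j. *)
Inductive gen : Type := Sg of nat | Rh of nat | Ga of nat.

(* a letter is a generator together with an "inverse" flag (true = inverse) *)
Definition letter := (gen * bool)%type.
Definition word := seq letter.

Definition sg (i : nat) : word := [:: (Sg i, false)].
Definition rh (i : nat) : word := [:: (Rh i, false)].
Definition ga (j : nat) : word := [:: (Ga j, false)].

Definition winv (w : word) : word := rev (map (fun l => (l.1, ~~ l.2)) w).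

Definition far (i j : nat) : bool := (i.+1 < j) || (j.+1 < i).

Inductive tvb_rel (n : nat) : word -> word -> Prop :=
| R_s_braid i : 1 <= i <= n - 2 ->
    tvb_rel n (sg i ++ sg i.+1 ++ sg i) (sg i.+1 ++ sg i ++ sg i.+1)
| R_s_comm i j : 1 <= i <= n - 1 -> 1 <= j <= n - 1 -> far i j ->
    tvb_rel n (sg i ++ sg j) (sg j ++ sg i)
| R_r_sq i : 1 <= i <= n - 1 -> tvb_rel n (rh i ++ rh i) [::]
| R_r_comm i j : 1 <= i <= n - 1 -> 1 <= j <= n - 1 -> far i j ->
    tvb_rel n (rh i ++ rh j) (rh j ++ rh i)
| R_r_braid i : 1 <= i <= n - 2 ->
    tvb_rel n (rh i ++ rh i.+1 ++ rh i) (rh i.+1 ++ rh i ++ rh i.+1)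
| R_sr_comm i j : 1 <= i <= n - 1 -> 1 <= j <= n - 1 -> far i j ->
    tvb_rel n (sg i ++ rh j) (rh j ++ sg i)
| R_mixed i : 1 <= i <= n - 2 ->
    tvb_rel n (rh i ++ rh i.+1 ++ sg i) (sg i.+1 ++ rh i ++ rh i.+1)
| R_g_sq i : 1 <= i <= n -> tvb_rel n (ga i ++ ga i) [::]
| R_g_comm i j : 1 <= i <= n -> 1 <= j <= n ->
    tvb_rel n (ga i ++ ga j) (ga j ++ ga i)
| R_gr_comm i j : 1 <= i <= n - 1 -> 1 <= j <= n -> j != i -> j != i.+1 ->
    tvb_rel n (ga j ++ rh i) (rh i ++ ga j)
| R_gs_comm i j : 1 <= i <= n - 1 -> 1 <= j <= n -> j != i -> j != i.+1 ->
    tvb_rel n (ga j ++ sg i) (sg i ++ ga j)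
| R_rg i : 1 <= i <= n - 1 -> tvb_rel n (rh i ++ ga i) (ga i.+1 ++ rh i)
| R_rsr i : 1 <= i <= n - 1 ->
    tvb_rel n (rh i ++ sg i ++ rh i) (ga i.+1 ++ ga i ++ sg i ++ ga i ++ ga i.+1).

Inductive tvb_eq (n : nat) : word -> word -> Prop :=
| te_refl w : tvb_eq n w w
| te_sym w1 w2 : tvb_eq n w1 w2 -> tvb_eq n w2 w1
| te_trans w1 w2 w3 : tvb_eq n w1 w2 -> tvb_eq n w2 w3 -> tvb_eq n w1 w3
| te_rel u v a b : tvb_rel n a b -> tvb_eq n (u ++ a ++ v) (u ++ b ++ v)
| te_cancel u v x b : tvb_eq n (u ++ [:: (x, b); (x, ~~ b)] ++ v) (u ++ v).

Definition valid_letter (n : nat) (l : letter) : bool :=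
  match l.1 with
  | Sg i | Rh i => (1 <= i <= n - 1)
  | Ga j => (1 <= j <= n)
  end.
Definition wf (n : nat) (w : word) : bool := all (valid_letter n) w.

Definition is_rho (n : nat) (l : letter) : bool :=
  if l.1 is Rh i then (1 <= i <= n - 1) else false.
Definition rho_word (n : nat) (w : word) : bool := all (is_rho n) w.

(* the transposition (i, i+1) of {1..n}, encoded on 'I_n via k |-> k-1 *)
Definition tr (n i : nat) : 'S_n :=
  match (insub i.-1 : option 'I_n), (insub i : option 'I_n) with
  | Some a, Some b => tperm a b
  | _, _ => 1%g
  end.

(* phi_P on letters and words; mathcomp's permutation product (s * t) x = t (s x)
   is the composition for right actions, as in the paper *)
Definition letter_perm (n : nat) (l : letter) : 'S_n :=
  let t := match l.1 with Sg i | Rh i => tr n i | Ga _ => 1%g end in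
  if l.2 then t^-1%g else t.
Definition phiP (n : nat) (w : word) : 'S_n :=
  foldr (fun l acc => (letter_perm n l * acc)%g) 1%g w.

Definition actn (n : nat) (s : 'S_n) (k : nat) : nat :=
  if (insub k.-1 : option 'I_n) is Some o then (nat_of_ord (s o)).+1 else k.

(* rho_a rho_{a+1} ... rho_b, and rho_b ... rho_a (empty if b < a) *)
Definition rho_up (a b : nat) : word := flatten [seq rh k | k <- iota a (b.+1 - a)].
Definition rho_down (a b : nat) : word := rev (rho_up a b).

Definition lam (i j : nat) : word :=
  if i < j then
    rho_down i.+1 j.-1 ++ (rh i ++ winv (sg i)) ++ rho_up i.+1 j.-1
  else
    rho_down j.+1 i.-1 ++ (rh j ++ (rh j ++ winv (sg j)) ++ rh j) ++ rho_up j.+1 i.-1.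

(* Main.v *)
Require Import Defs.
From mathcomp Require Import all_boot all_fingroup.
From mathcomp Require Import zify.
From Stdlib Require Import Setoid Morphisms.
Unset Printing Implicit Defensive.

Notation R k := (Rh k, false).
Notation Ri k := (Rh k, true).
Notation S k := (Sg k, false).
Notation Si k := (Sg k, true).

Lemma te_ctx n a b : tvb_eq n a b -> forall u v, tvb_eq n (u ++ a ++ v) (u ++ b ++ v).
Proof.
elim=> {a b}.
- move=> w u v; exact: te_refl.
- move=> w1 w2 _ IH u v; exact: te_sym.
- move=> w1 w2 w3 _ IH1 _ IH2 u v; exact: te_trans (IH1 u v) (IH2 u v).
- move=> u' v' a b H u v.
  have := te_rel (u ++ u') (v' ++ v) H. by rewrite !catA -!(catA _ _ v) !catA.
- move=> u' v' x b u v.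
  have := te_cancel n (u ++ u') (v' ++ v) x b. by rewrite !catA -!(catA _ _ v) !catA.
Qed.

#[export] Hint Resolve te_refl : core.

#[export] Instance tvb_equiv n : Equivalence (tvb_eq n).
Proof. split; [exact: te_refl | exact: te_sym | exact: te_trans]. Qed.

#[export] Instance cat_proper n : Proper (tvb_eq n ==> tvb_eq n ==> tvb_eq n) (@cat letter).
Proof.
move=> a b H c d H'. transitivity (b ++ c).
- exact: (te_ctx _ _ _ H [::] c).
- have := te_ctx _ _ _ H' b [::]. by rewrite !cats0.
Qed.

#[export] Instance cons_proper n : Proper (eq ==> tvb_eq n ==> tvb_eq n) (@cons letter).
Proof. move=> x y -> a b H. exact: (cat_proper n [:: y] [:: y] (te_refl n _) a b H). Qed.

Lemma rel_w n a b w : tvb_rel n a b -> tvb_eq n (a ++ w) (b ++ w).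
Proof. move=> H. have := te_rel [::] w H. by []. Qed.

Lemma canc n x b w : tvb_eq n ((x, b) :: (x, ~~ b) :: w) w.
Proof. exact: (te_cancel n [::] w x b). Qed.

Lemma cancS n k w : tvb_eq n (S k :: Si k :: w) w.
Proof. exact: (canc n (Sg k) false w). Qed.
Lemma cancSi n k w : tvb_eq n (Si k :: S k :: w) w.
Proof. exact: (canc n (Sg k) true w). Qed.

Lemma rr n k w : 1 <= k <= n - 1 -> tvb_eq n (R k :: R k :: w) w.
Proof. move=> h. exact: (rel_w _ _ _ w (R_r_sq h)). Qed.

Lemma riR n k w : 1 <= k <= n - 1 -> tvb_eq n (Ri k :: w) (R k :: w).
Proof.
move=> h. transitivity (Ri k :: R k :: R k :: w); first by rewrite rr.
exact: (canc n (Rh k) true).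
Qed.

Lemma rcomm n i j w : 1 <= i <= n - 1 -> 1 <= j <= n - 1 -> far i j ->
  tvb_eq n (R i :: R j :: w) (R j :: R i :: w).
Proof. move=> hi hj f. exact: (rel_w _ _ _ w (R_r_comm hi hj f)). Qed.

Lemma rbraid n i w : 1 <= i <= n - 2 ->
  tvb_eq n (R i :: R i.+1 :: R i :: w) (R i.+1 :: R i :: R i.+1 :: w).
Proof. move=> h. exact: (rel_w _ _ _ w (R_r_braid h)). Qed.

Lemma srcomm n i j w : 1 <= i <= n - 1 -> 1 <= j <= n - 1 -> far i j ->
  tvb_eq n (S i :: R j :: w) (R j :: S i :: w).
Proof. move=> hi hj f. exact: (rel_w _ _ _ w (R_sr_comm hi hj f)). Qed.

Lemma sircomm n i j w : 1 <= i <= n - 1 -> 1 <= j <= n - 1 -> far i j ->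
  tvb_eq n (Si i :: R j :: w) (R j :: Si i :: w).
Proof.
move=> hi hj f.
transitivity (Si i :: R j :: S i :: Si i :: w); first by rewrite cancS.
rewrite -(srcomm _ _ _ _ hi hj f). by rewrite cancSi.
Qed.

Lemma mixed n h w : 1 <= h <= n - 2 ->
  tvb_eq n (R h :: R h.+1 :: S h :: w) (S h.+1 :: R h :: R h.+1 :: w).
Proof. move=> hh. exact: (rel_w _ _ _ w (R_mixed hh)). Qed.

Lemma mixed' n h w : 1 <= h <= n - 2 ->
  tvb_eq n (Si h.+1 :: R h :: R h.+1 :: w) (R h :: R h.+1 :: Si h :: w).
Proof.
move=> hh.
transitivity (Si h.+1 :: R h :: R h.+1 :: S h :: Si h :: w); first by rewrite cancS.
rewrite mixed //. by rewrite cancSi.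
Qed.

Lemma tr_val n i (x : 'I_n) : 1 <= i < n ->
  val (tr n i x) = if val x == i.-1 then i else if val x == i then i.-1 else val x.
Proof.
move=> hi. rewrite /tr.
case: insubP => [a _ ea|]; last by rewrite /=; lia.
case: insubP => [b _ eb|]; last by rewrite /=; lia.
case: tpermP => [->|->|hxa hxb].
- by rewrite ea eb eqxx.
- rewrite ea eb ifN ?eqxx //; lia.
- have h1 : val x != i.-1 by rewrite -ea val_eqE; apply/eqP.
  have h2 : val x != i by rewrite -eb val_eqE; apply/eqP.
  by rewrite (negbTE h1) (negbTE h2).
Qed.

Ltac ifsplit := repeat match goal with |- context [if ?c then _ else _] =>
  lazymatch c with context [if _ then _ else _] => fail | _ =>
  let E := fresh "E" in destruct c eqn:E; [move/eqP: E => E | move/negbT/eqP: E => E] end end.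

Lemma tr_valh n i (hi : 1 <= i < n) (x : 'I_n) :
  val (tr n i x) = if val x == i.-1 then i else if val x == i then i.-1 else val x.
Proof. exact: tr_val. Qed.
Arguments tr_valh {n i} hi x.

Lemma tr_comm n i j : 1 <= i < n -> 1 <= j < n -> far i j -> (tr n i * tr n j = tr n j * tr n i)%g.
Proof.
move=> hi hj f; apply/permP => x; apply: val_inj; rewrite !permM.
do 3?rewrite ?(tr_valh hi) ?(tr_valh hj).
move: f; rewrite /far => f.
ifsplit; lia.
Qed.

Lemma tr_braid n i : 1 <= i -> i.+1 < n -> (tr n i * tr n i.+1 * tr n i = tr n i.+1 * tr n i * tr n i.+1)%g.
Proof.
move=> h1 h2. have hi : 1 <= i < n by lia. have hj : 1 <= i.+1 < n by lia.
apply/permP => x; apply: val_inj; rewrite !permM.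
do 4?rewrite ?(tr_valh hi) ?(tr_valh hj).
ifsplit; lia.
Qed.

Lemma tr_sq n i : (tr n i * tr n i = 1)%g.
Proof. rewrite /tr; case: (insub i.-1 : option 'I_n) => [a|]; case: (insub i : option 'I_n) => [b|]; by rewrite ?tperm2 ?mulg1. Qed.

Lemma tr_inv n i : ((tr n i)^-1 = tr n i)%g.
Proof. rewrite /tr; case: (insub i.-1 : option 'I_n) => [a|]; case: (insub i : option 'I_n) => [b|]; by rewrite ?tpermV ?invg1. Qed.

Lemma phiP_cat n a b : phiP n (a ++ b) = (phiP n a * phiP n b)%g.
Proof. elim: a => [|l a IH] /=; first by rewrite mul1g. by rewrite IH mulgA. Qed.

Lemma winv_cons (l : letter) w : winv (l :: w) = winv w ++ [:: (l.1, ~~ l.2)].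
Proof. by rewrite /winv /= rev_cons cats1. Qed.

Lemma lp_flip n (l : letter) : letter_perm n (l.1, ~~ l.2) = ((letter_perm n l)^-1)%g.
Proof. rewrite /letter_perm /=; case: l.2 => /=; by rewrite ?invgK. Qed.

Lemma phiP_winv n w : phiP n (winv w) = ((phiP n w)^-1)%g.
Proof.
elim: w => [|l w IH]; first by rewrite /= invg1.
by rewrite winv_cons phiP_cat IH /= lp_flip mulg1 invMg.
Qed.

Lemma phiP_rel n a b : tvb_rel n a b -> phiP n a = phiP n b.
Proof.
case=> {a b} [i h|i j hi hj f|i h|i j hi hj f|i h|i j hi hj f|i h|i h|i j hi hj|i j hi hj ??|i j hi hj ??|i h|i h];
  rewrite /= /letter_perm /= ?mulg1 ?mul1g ?mulgA //.
- apply: tr_braid; lia.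
- apply: tr_comm => //; lia.
- exact: tr_sq.
- apply: tr_comm => //; lia.
- apply: tr_braid; lia.
- apply: tr_comm => //; lia.
- apply: tr_braid; lia.
- by rewrite tr_sq mul1g.
Qed.

Lemma phiP_eq n a b : tvb_eq n a b -> phiP n a = phiP n b.
Proof.
elim=> {a b} //; clear.
- by move=> w1 w2 w3 _ -> _ ->.
- by move=> u v a b H; rewrite !phiP_cat (phiP_rel _ _ _ H).
- move=> u v x b. rewrite !phiP_cat /=. 
  have -> : letter_perm n (x, ~~ b) = ((letter_perm n (x, b))^-1)%g by rewrite (lp_flip n (x, b)).
  by rewrite mulg1 mulgV mul1g.
Qed.

Lemma actnE n (s : 'S_n) x (hx : 1 <= x <= n) :
  exists o : 'I_n, val o = x.-1 /\ actn s x = (val (s o)).+1.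
Proof.
rewrite /actn. case: insubP => [o _ eo|]; last by rewrite /=; lia.
by exists o.
Qed.
Arguments actnE {n} s {x} hx.

Lemma actn_range n (s : 'S_n) x : 1 <= x <= n -> 1 <= actn s x <= n.
Proof. move=> hx. have [o [_ ->]] := actnE s hx. have : val (s o) < n := ltn_ord (s o). lia. Qed.

Lemma actnM n (s t : 'S_n) x : 1 <= x <= n -> actn (s * t)%g x = actn t (actn s x).
Proof.
move=> hx. have [o [eo ->]] := actnE (s * t)%g hx.
have [o' [eo' ->]] := actnE s hx.
have -> : o' = o by apply: val_inj; rewrite eo eo'.
have hy : 1 <= (val (s o)).+1 <= n by have : val (s o) < n := ltn_ord (s o); lia.
have [o2 [eo2 ->]] := actnE t hy.
have -> : o2 = s o by apply: val_inj; rewrite eo2.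
by rewrite permM.
Qed.

Lemma actn_inj n (s : 'S_n) x y : 1 <= x <= n -> 1 <= y <= n -> actn s x = actn s y -> x = y.
Proof.
move=> hx hy. have [o [eo ->]] := actnE s hx. have [o' [eo' ->]] := actnE s hy.
case=> /val_inj /perm_inj e. move: eo eo'; rewrite e => -> ; lia.
Qed.

Definition sk (k x : nat) := if x == k then k.+1 else if x == k.+1 then k else x.

Lemma actn_tr n k x : 1 <= k < n -> 1 <= x <= n -> actn (tr n k) x = sk k x.
Proof.
move=> hk hx. have [o [eo ->]] := actnE (tr n k) hx.
rewrite (tr_valh hk) eo /sk. ifsplit; lia.
Qed.

Lemma actn1 n x : 1 <= x <= n -> actn (1%g : 'S_n) x = x.
Proof. move=> hx. have [o [eo ->]] := actnE 1%g hx. rewrite perm1 eo. lia. Qed.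

Ltac side := rewrite /far; lia.

Fixpoint Up a m : word := if m is m'.+1 then R a :: Up a.+1 m' else [::].
Fixpoint Dn a m : word := if m is m'.+1 then R (a + m') :: Dn a m' else [::].

Lemma Up_snoc a m : Up a m.+1 = Up a m ++ [:: R (a + m)].
Proof. elim: m a => [|m IH] a; first by rewrite /= addn0. by rewrite -[Up a m.+2]/(R a :: Up a.+1 m.+1) IH addSnnS. Qed.

Lemma Dn_snoc a m : Dn a m.+1 = Dn a.+1 m ++ [:: R a].
Proof. elim: m => [|m IH]; first by rewrite /= addn0. by rewrite -[Dn a m.+2]/(R (a + m.+1) :: Dn a m.+1) IH /= addSnnS. Qed.

Lemma Up_flat a m : Up a m = flatten [seq rh k | k <- iota a m].
Proof. by elim: m a => [|m IH] a //=; rewrite IH. Qed.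

Lemma rho_upE a b : rho_up a b = Up a (b.+1 - a).
Proof. by rewrite /rho_up Up_flat. Qed.

Lemma rev_Up a m : rev (Up a m) = Dn a m.
Proof. elim: m a => [|m IH] a //. by rewrite -[Up a m.+1]/(R a :: Up a.+1 m) rev_cons IH -cats1 -Dn_snoc. Qed.

Lemma rho_downE a b : rho_down a b = Dn a (b.+1 - a).
Proof. by rewrite /rho_down rho_upE rev_Up. Qed.

Lemma comm_Dn n k a m w : 1 <= k <= n - 1 -> 1 <= a -> a + m <= n -> (k.+1 < a) || (a + m < k) ->
  tvb_eq n (R k :: Dn a m ++ w) (Dn a m ++ R k :: w).
Proof.
move=> hk ha ham f. elim: m ham f w => [|m IH] ham f w //=.
rewrite (rcomm n k (a + m)); [|side..]. by rewrite IH; [|side..].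
Qed.

Lemma comm_Up n k a m w : 1 <= k <= n - 1 -> 1 <= a -> a + m <= n -> (k.+1 < a) || (a + m < k) ->
  tvb_eq n (R k :: Up a m ++ w) (Up a m ++ R k :: w).
Proof.
move=> hk. elim: m a w => [|m IH] a w ha ham f //=.
rewrite (rcomm n k a); [|side..]. by rewrite IH; [|side..].
Qed.

Lemma shift_Dn n k a m w : 1 <= a -> a <= k -> k.+2 <= a + m -> a + m <= n ->
  tvb_eq n (R k :: Dn a m ++ w) (Dn a m ++ R k.+1 :: w).
Proof.
move=> ha hak hk ham. elim: m hk ham w => [|m IH] hk ham w; first lia.
case: (ltnP k.+2 (a + m.+1)) => h.
- rewrite /= (rcomm n k (a + m)); [|side..]. by rewrite IH; [|side..].
- case: m IH hk ham h => [|m'] IH hk ham h; first lia.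
  have e : a + m' = k by lia.
  rewrite [Dn a _]/= [Dn a _]/= addnS e.
  rewrite (rbraid n k); [|side..].
  by rewrite (comm_Dn n k.+1 a m'); [|side..].
Qed.

Lemma shift_Up n k a m w : 1 <= a -> a <= k -> k.+2 <= a + m -> a + m <= n ->
  tvb_eq n (Up a m ++ R k :: w) (R k.+1 :: Up a m ++ w).
Proof.
elim: m a w => [|m IH] a w ha hak hk ham; first lia.
case: (ltnP a k) => h.
- rewrite /= IH; [|side..]. by rewrite (rcomm n a k.+1); [|side..].
- case: m IH hk ham => [|m'] IH hk ham; first lia.
  have e : a = k by lia. subst a.
  rewrite [Up k _]/=.
  rewrite /= -(comm_Up n k k.+2 m'); [|side..].
  by rewrite (rbraid n k); [|side..].
Qed.

Fixpoint isNF (m : nat) (w : word) : Prop :=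
  match m with
  | 0 => w = [::]
  | m'.+1 => exists u j, [/\ isNF m' u, 1 <= j <= m'.+2 & w = u ++ Dn j (m'.+2 - j)]
  end.

Lemma nf_nil m : isNF m [::].
Proof. elim: m => [|m IH] //=. exists [::], m.+2. split => //; [lia | by rewrite subnn]. Qed.

Lemma nf_step n m : m < n -> forall u, isNF m u -> forall k, 1 <= k <= m ->
  exists u', isNF m u' /\ tvb_eq n (u ++ [:: R k]) u'.
Proof.
elim: m => [|m IH] hm u; first by move=> _ k; lia.
case=> v [j [hv hj ->]] k hk.
have hm' : m < n by lia.
case: (ltnP k.+1 j) => h1.
- have [v' [hv' e]] := IH hm' v hv k ltac:(lia).
  exists (v' ++ Dn j (m.+2 - j)); split; first by exists v', j; split.
  rewrite -catA /= -(comm_Dn n k j (m.+2 - j)); [|side..].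
  by rewrite -e -catA cats0.
case: (ltnP j k) => h2; last first.
  case: (ltnP k j) => h3.
  + have e : j = k.+1 by lia. subst j.
    exists (v ++ Dn k (m.+2 - k)); split; first by exists v, k; split => //; lia.
    have -> : m.+2 - k = (m.+2 - k.+1).+1 by lia.
    by rewrite Dn_snoc -catA.
  + have e : j = k by lia. subst j.
    exists (v ++ Dn k.+1 (m.+2 - k.+1)); split; first by exists v, k.+1; split => //; lia.
    have -> : m.+2 - k = (m.+2 - k.+1).+1 by lia.
    rewrite Dn_snoc -!catA /= rr; [|side..]. by rewrite cats0.
case: k hk h1 h2 => [|k] hk h1 h2; first lia.
have [v' [hv' e]] := IH hm' v hv k ltac:(lia).
exists (v' ++ Dn j (m.+2 - j)); split; first by exists v', j; split.
rewrite -catA -(shift_Dn n k j (m.+2 - j)); [|side..].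
by rewrite -e -catA cats0.
Qed.

Definition rb (m : nat) (l : letter) : bool :=
  match l with (Rh k, false) => (1 <= k <= m) | _ => false end.

Lemma all_Dn M a L : 1 <= a -> a + L <= M.+1 -> all (rb M) (Dn a L).
Proof. move=> ha; elim: L => [|L IH] h //=. rewrite IH ?andbT; lia. Qed.

Lemma all_rb_mono m m' u : m <= m' -> all (rb m) u -> all (rb m') u.
Proof.
move=> hm; elim: u => [|[[k|k|k] [|]] u IH] //=; move/andP=> [h1 h2]; rewrite IH // andbT; lia.
Qed.

Lemma nf_all m u : isNF m u -> all (rb m) u.
Proof.
elim: m u => [|m IH] u /=; first by move->.
case=> v [j [hv hj ->]]. rewrite all_cat (all_rb_mono m m.+1 v) ?IH //.
apply: all_Dn; lia.
Qed.

Lemma fix_hi n m u x : all (rb m) u -> m.+1 < x <= n -> actn (phiP n u) x = x.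
Proof.
move=> hu hx; elim: u hu => [|[[k|k|k] [|]] u IH] //=; first by move=> _; rewrite actn1 //; lia.
move/andP=> [h1 h2]. rewrite actnM; last lia.
rewrite /letter_perm /= actn_tr; [|lia|lia]. rewrite /sk.
rewrite ifN; last (apply/eqP; lia). rewrite ifN; last (apply/eqP; lia).
exact: IH.
Qed.

Lemma Dn_top n a L : 1 <= a -> a + L <= n -> actn (phiP n (Dn a L)) (a + L) = a.
Proof.
move=> ha; elim: L => [|L IH] h /=; first by rewrite addn0 actn1 //; lia.
rewrite actnM; last lia.
rewrite /letter_perm /= actn_tr; [|lia|lia]. rewrite /sk.
rewrite ifN; last (apply/eqP; lia). rewrite addnS eqxx IH //; lia.
Qed.

Lemma nf_inj n m : m < n -> forall u u', isNF m u -> isNF m u' -> phiP n u = phiP n u' -> u = u'.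
Proof.
elim: m => [|m IH] hm u u' /=; first by move=> -> ->.
case=> v [j [hv hj ->]]; case=> v' [j' [hv' hj' ->]] e.
have key : forall w i, isNF m w -> 1 <= i <= m.+2 ->
    actn (phiP n (w ++ Dn i (m.+2 - i))) m.+2 = i.
  move=> w i hw hi. rewrite phiP_cat actnM; last lia.
  rewrite (fix_hi n m w m.+2 (nf_all m w hw)); last lia.
  have H := Dn_top n i (m.+2 - i) ltac:(lia) ltac:(lia).
  rewrite subnKC in H; [exact H|lia].
have ej : j = j' by rewrite -(key v j hv hj) -(key v' j' hv' hj') e.
subst j'. move: e; rewrite !phiP_cat => /mulIg e.
by rewrite (IH ltac:(lia) v v' hv hv' e).
Qed.

Lemma nf_exists n : 1 <= n -> forall a, rho_word n a -> exists u, isNF (n - 1) u /\ tvb_eq n a u.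
Proof.
move=> hn a; elim/last_ind: a => [|a l IH].
  by move=> _; exists [::]; split => //; exact: nf_nil.
rewrite /rho_word all_rcons => /andP [hl ha].
have [u [hu e]] := IH ha.
case: l hl => [[k|k|k] b] //= hk.
have {}hk : 1 <= k <= n - 1 by [].
have [u' [hu' e']] := nf_step n (n - 1) ltac:(lia) u hu k hk.
exists u'; split => //.
rewrite -cats1 e. case: b; last exact: e'.
by rewrite (riR n k [::]).
Qed.

Lemma rho_inj n : 1 <= n -> forall a1 a2, rho_word n a1 -> rho_word n a2 ->
  phiP n a1 = phiP n a2 -> tvb_eq n a1 a2.
Proof.
move=> hn a1 a2 h1 h2 e.
have [u1 [hu1 e1]] := nf_exists n hn a1 h1.
have [u2 [hu2 e2]] := nf_exists n hn a2 h2.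
have eu : u1 = u2.
  apply: (nf_inj n (n - 1) ltac:(lia)) => //.
  by rewrite -(phiP_eq n _ _ e1) -(phiP_eq n _ _ e2).
by rewrite e1 e2 eu.
Qed.

Lemma tr_tperm n (x y : 'I_n) : val y = (val x).+1 -> tr n (val y) = tperm x y.
Proof. move=> e. rewrite /tr {1}e /= !valK. by []. Qed.

Lemma tperm_word n (x y : 'I_n) : exists a, rho_word n a /\ phiP n a = tperm x y.
Proof.
wlog lt : x y / val x < val y.
  move=> W. case: (ltngtP (val x) (val y)) => h; first exact: W.
  - rewrite tpermC; exact: W.
  - have -> : x = y by apply: val_inj. exists [::]; by rewrite tperm1.
have [d e] : exists d, val y = val x + d.+1 by exists (val y - (val x).+1); lia.
elim: d x y lt e => [|d IH] x y lt e.
  exists [:: R (val y)]; split.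
    have : val y < n := ltn_ord y. move=> ?.
    have hy : 1 <= val y <= n - 1 by lia. by rewrite /rho_word /= andbT.
  rewrite /= /letter_perm /= mulg1. apply: tr_tperm; lia.
have hz : (val y).-1 < n by have : val y < n := ltn_ord y; lia.
pose z := Ordinal hz.
have ez : val z = (val y).-1 by [].
have [a [ha pa]] := IH x z ltac:(rewrite ez; lia) ltac:(rewrite ez; lia).
exists ([:: R (val y)] ++ a ++ [:: R (val y)]); split.
  have : val y < n := ltn_ord y. move=> ?.
  have hy : 1 <= val y <= n - 1 by lia. move: ha; rewrite /rho_word all_cat all_cat => -> /=.
  have hr : is_rho n (R (val y)) := hy. by rewrite hr.
rewrite !phiP_cat pa /= /letter_perm /= mulg1.
have -> : tr n (val y) = tperm z y by apply: tr_tperm; rewrite ez; lia.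
have Hc := tpermJ x z (tperm z y).
rewrite tpermL (tpermD (x := z) (y := y) (z := x)) in Hc; last first.
  - by apply/eqP => E; move: lt; rewrite E ltnn.
  - apply/eqP => E; move: e; rewrite -E ez; lia.
by rewrite -Hc conjgE tpermV mulgA.
Qed.

Lemma rho_surj n (s : 'S_n) : exists a, rho_word n a /\ phiP n a = s.
Proof.
have [ts -> _] := prod_tpermP s.
elim: ts => [|t ts [a [ha pa]]]; first by exists [::]; rewrite big_nil.
have [b [hb pb]] := tperm_word n t.1 t.2.
exists (b ++ a); split; first by rewrite /rho_word all_cat; apply/andP.
by rewrite phiP_cat pa pb big_cons.
Qed.

Lemma LL i j m : j = i.+1 + m ->
  lam i j = Dn i.+1 m ++ [:: R i; Si i] ++ Up i.+1 m.
Proof.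
move=> ->. rewrite /lam ifT; last lia. rewrite rho_downE rho_upE.
have -> : (i.+1 + m).-1.+1 - i.+1 = m by lia. by [].
Qed.

Lemma LG i j m : i = j.+1 + m ->
  lam i j = Dn j.+1 m ++ [:: R j; R j; Si j; R j] ++ Up j.+1 m.
Proof.
move=> ->. rewrite /lam ifF; last lia. rewrite rho_downE rho_upE.
have -> : (j.+1 + m).-1.+1 - j.+1 = m by lia. by [].
Qed.

Lemma lam_lt i j : i < j ->
  lam i j = Dn i.+1 (j - i.+1) ++ [:: R i; Si i] ++ Up i.+1 (j - i.+1).
Proof.
move=> h. rewrite /lam h rho_downE rho_upE.
have -> : (j.-1).+1 = j by lia. by [].
Qed.

Lemma lam_gt i j : j < i ->
  lam i j = Dn j.+1 (i - j.+1) ++ [:: R j; R j; Si j; R j] ++ Up j.+1 (i - j.+1).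
Proof.
move=> h. rewrite /lam ltnNge (ltnW h) /= rho_downE rho_upE.
have -> : (i.-1).+1 = i by lia. by [].
Qed.

Notation CW n k X := (forall w, tvb_eq n (R k :: X ++ w) (X ++ R k :: w)).

Lemma CW_cat n k X Y : CW n k X -> CW n k Y -> CW n k (X ++ Y).
Proof. move=> hX hY w. by rewrite -!catA hX hY. Qed.

Lemma CW_R n k i : 1 <= k <= n - 1 -> 1 <= i <= n - 1 -> far k i -> CW n k [:: R i].
Proof. move=> hk hi f w /=. exact: rcomm. Qed.

Lemma CW_Si n k i : 1 <= k <= n - 1 -> 1 <= i <= n - 1 -> far k i -> CW n k [:: Si i].
Proof. move=> hk hi f w /=. symmetry. apply: sircomm => //. move: f; rewrite /far; lia. Qed.

Lemma CW_Dn n k a m : 1 <= k <= n - 1 -> 1 <= a -> a + m <= n -> (k.+1 < a) || (a + m < k) ->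
  CW n k (Dn a m).
Proof. move=> hk ha ham f w; exact: comm_Dn. Qed.

Lemma CW_Up n k a m : 1 <= k <= n - 1 -> 1 <= a -> a + m <= n -> (k.+1 < a) || (a + m < k) ->
  CW n k (Up a m).
Proof. move=> hk ha ham f w; exact: comm_Up. Qed.

Lemma CW_conj n k X : 1 <= k <= n - 1 -> CW n k X -> tvb_eq n (R k :: X ++ [:: R k]) X.
Proof. move=> hk h. rewrite h rr //. by rewrite cats0. Qed.

Lemma K1 n h w : 1 <= h -> h.+1 <= n - 1 ->
  tvb_eq n (R h :: R h.+1 :: R h :: Si h :: R h.+1 :: R h :: w) (R h.+1 :: Si h.+1 :: w).
Proof.
move=> h1 h2.
rewrite (rbraid n h); [|side..].
rewrite -(mixed' n h); [|side..].
rewrite rr; [|side..]. by rewrite rr; [|side..].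
Qed.

Lemma mx2 n h w : 1 <= h -> h.+1 <= n - 1 ->
  tvb_eq n (R h.+1 :: R h :: Si h.+1 :: R h :: R h.+1 :: w) (Si h :: w).
Proof.
move=> h1 h2.
rewrite (mixed' n h); [|side..].
rewrite (rr n h); [|side..]. by rewrite (rr n h.+1); [|side..].
Qed.

Lemma Kb n h w : 1 <= h -> h.+1 <= n - 1 ->
  tvb_eq n (R h :: R h.+1 :: Si h.+1 :: R h :: w) (R h.+1 :: R h :: Si h :: R h.+1 :: w).
Proof.
move=> h1 h2.
rewrite -(mx2 n h); [|side..].
rewrite (rr n h.+1); [|side..].
rewrite -(rbraid n h); [|side..].
by rewrite (rr n h); [|side..].
Qed.

Lemma Kb' n h w : 1 <= h -> h.+1 <= n - 1 ->
  tvb_eq n (R h :: Si h.+1 :: R h.+1 :: R h :: w) (R h.+1 :: Si h :: R h :: R h.+1 :: w).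
Proof.
move=> h1 h2.
rewrite -(mx2 n h); [|side..].
rewrite (rr n h.+1); [|side..].
rewrite (rbraid n h); [|side..].
by rewrite (rr n h.+1); [|side..].
Qed.

Lemma Kc' n h w : 1 <= h -> h.+1 <= n - 1 ->
  tvb_eq n (R h :: R h.+1 :: Si h :: R h :: R h.+1 :: R h :: w) (Si h.+1 :: R h.+1 :: w).
Proof.
move=> h1 h2.
rewrite -(mx2 n h); [|side..].
rewrite (rr n h.+1); [|side..].
rewrite (rr n h); [|side..].
rewrite (rbraid n h); [|side..].
rewrite (rr n h.+1); [|side..].
by rewrite (rr n h); [|side..].
Qed.

Lemma CW_mid_lt n k i : 1 <= k <= n - 1 -> 1 <= i <= n - 1 -> far k i -> CW n k [:: R i; Si i].
Proof. move=> hk hi f w. have H := CW_cat n k [:: R i] [:: Si i] (CW_R n k i hk hi f) (CW_Si n k i hk hi f) w. exact: H. Qed.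

Lemma CW_mid_gt n k i : 1 <= k <= n - 1 -> 1 <= i <= n - 1 -> far k i -> CW n k [:: R i; R i; Si i; R i].
Proof.
move=> hk hi f w.
have H := CW_cat n k [:: R i] _ (CW_R n k i hk hi f) (CW_cat n k [:: R i] _ (CW_R n k i hk hi f)
         (CW_cat n k [:: Si i] _ (CW_Si n k i hk hi f) (CW_R n k i hk hi f))) w.
exact H.
Qed.

Lemma step_lt n k i m : 1 <= k <= n - 1 -> 1 <= i -> i.+1 + m <= n ->
  tvb_eq n (R k :: lam i (i.+1 + m) ++ [:: R k]) (lam (sk k i) (sk k (i.+1 + m))).
Proof.
move=> hk hi hm.
case: (ltnP k.+1 i) => c1.
  have -> : sk k i = i by rewrite /sk; ifsplit; lia.
  have -> : sk k (i.+1 + m) = i.+1 + m by rewrite /sk; ifsplit; lia.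
  apply: CW_conj => //. rewrite (LL i _ m) //.
  move=> w; rewrite -!catA.
  rewrite (CW_Dn n k i.+1 m); [|side..].
  rewrite (CW_mid_lt n k i); [|side..].
  by rewrite (CW_Up n k i.+1 m); [|side..].
case: (eqVneq k.+1 i) => c2.
  subst i.
  have -> : sk k k.+1 = k by rewrite /sk; ifsplit; lia.
  have -> : sk k (k.+2 + m) = k.+2 + m by rewrite /sk; ifsplit; lia.
  rewrite (LL k.+1 _ m) // (LL k _ m.+1); last lia.
  rewrite Dn_snoc [Up k.+1 _]/= -!catA /=.
  rewrite (comm_Dn n k k.+2 m); [|side..].
  rewrite -(comm_Up n k k.+2 m [::]); [|side..].
  rewrite cats0 (Kb n k); [|side..].
  by [].
case: (eqVneq k i) => c3.
  subst i.
  case: m hm => [|m] hm.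
    have -> : sk k k = k.+1 by rewrite /sk; ifsplit; lia.
    have -> : sk k (k.+1 + 0) = k by rewrite /sk; ifsplit; lia.
    rewrite (LL k _ 0) // (LG k.+1 k 0); last lia.
    by [].
  have -> : sk k k = k.+1 by rewrite /sk; ifsplit; lia.
  have -> : sk k (k.+1 + m.+1) = k.+1 + m.+1 by rewrite /sk; ifsplit; lia.
  rewrite (LL k _ m.+1) // (LL k.+1 _ m); last lia.
  rewrite Dn_snoc [Up k.+1 _]/= -!catA /=.
  rewrite (comm_Dn n k k.+2 m); [|side..].
  rewrite -(comm_Up n k k.+2 m [::]); [|side..].
  rewrite cats0 (K1 n k); [|side..].
  by [].
have c4 : i < k by lia.
have -> : sk k i = i by rewrite /sk; ifsplit; lia.
case: (ltnP k (i + m)) => c5.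
  have -> : sk k (i.+1 + m) = i.+1 + m by rewrite /sk; ifsplit; lia.
  rewrite (LL i _ m) // -!catA /=.
  rewrite (shift_Dn n k i.+1 m); [|side..].
  rewrite (CW_mid_lt n k.+1 i); [|side..].
  rewrite (shift_Up n k i.+1 m); [|side..].
  by rewrite (rr n k.+1) ?cats0; [|side..].
case: (eqVneq k (i + m)) => c6.
  case: m hm c5 c4 c6 => [|m] hm c5 c4 c6; first lia.
  have ek : k = i.+1 + m by lia. clear c6 c5. subst k.
  have -> : sk (i.+1 + m) (i.+1 + m.+1) = i.+1 + m by rewrite /sk; ifsplit; lia.
  rewrite (LL i _ m.+1) // (LL i _ m) //.
  rewrite [Dn _ m.+1]/= Up_snoc -!catA /=.
  rewrite (rr n (i.+1 + m)); [|side..].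
  rewrite (rr n (i.+1 + m)); [|side..]. by rewrite (cats0 (Up _ _)).
case: (eqVneq k (i + m).+1) => c7.
  have ek : k = i.+1 + m by lia. clear c7 c6 c5. subst k.
  have -> : sk (i.+1 + m) (i.+1 + m) = i.+1 + m.+1 by rewrite /sk; ifsplit; lia.
  rewrite (LL i _ m) // (LL i _ m.+1) //.
  by rewrite [Dn _ m.+1]/= Up_snoc -!catA /=.
have -> : sk k (i.+1 + m) = i.+1 + m by rewrite /sk; ifsplit; lia.
apply: CW_conj => //. rewrite (LL i _ m) //.
move=> w; rewrite -!catA.
rewrite (CW_Dn n k i.+1 m); [|side..].
rewrite (CW_mid_lt n k i); [|side..].
by rewrite (CW_Up n k i.+1 m); [|side..].
Qed.

Lemma step_gt n k j m : 1 <= k <= n - 1 -> 1 <= j -> j.+1 + m <= n ->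
  tvb_eq n (R k :: lam (j.+1 + m) j ++ [:: R k]) (lam (sk k (j.+1 + m)) (sk k j)).
Proof.
move=> hk hj hm.
case: (ltnP k.+1 j) => c1.
  have -> : sk k j = j by rewrite /sk; ifsplit; lia.
  have -> : sk k (j.+1 + m) = j.+1 + m by rewrite /sk; ifsplit; lia.
  apply: CW_conj => //. rewrite (LG _ j m) //.
  move=> w; rewrite -!catA.
  rewrite (CW_Dn n k j.+1 m); [|side..].
  rewrite (CW_mid_gt n k j); [|side..].
  by rewrite (CW_Up n k j.+1 m); [|side..].
case: (eqVneq k.+1 j) => c2.
  subst j.
  have -> : sk k k.+1 = k by rewrite /sk; ifsplit; lia.
  have -> : sk k (k.+2 + m) = k.+2 + m by rewrite /sk; ifsplit; lia.
  rewrite (LG _ k.+1 m) // (LG _ k m.+1); last lia.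
  rewrite Dn_snoc [Up k.+1 _]/= -!catA /=.
  rewrite (comm_Dn n k k.+2 m); [|side..].
  rewrite -(comm_Up n k k.+2 m [::]); [|side..].
  rewrite (cats0 (Up _ _)).
  rewrite (rr n k.+1); [|side..].
  rewrite (rr n k); [|side..].
  by rewrite (Kb' n k); [|side..].
case: (eqVneq k j) => c3.
  subst j.
  case: m hm => [|m] hm.
    have -> : sk k k = k.+1 by rewrite /sk; ifsplit; lia.
    have -> : sk k (k.+1 + 0) = k by rewrite /sk; ifsplit; lia.
    rewrite (LG _ k 0) // (LL k _ 0); last lia.
    rewrite /= (rr n k); [|side..]. by rewrite (rr n k); [|side..].
  have -> : sk k k = k.+1 by rewrite /sk; ifsplit; lia.
  have -> : sk k (k.+1 + m.+1) = k.+1 + m.+1 by rewrite /sk; ifsplit; lia.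
  rewrite (LG _ k m.+1) // (LG _ k.+1 m); last lia.
  rewrite Dn_snoc [Up k.+1 _]/= -!catA /=.
  rewrite (comm_Dn n k k.+2 m); [|side..].
  rewrite -(comm_Up n k k.+2 m [::]); [|side..].
  rewrite (cats0 (Up _ _)).
  rewrite (rr n k); [|side..].
  rewrite (Kc' n k); [|side..].
  by rewrite (rr n k.+1); [|side..].
have c4 : j < k by lia.
have -> : sk k j = j by rewrite /sk; ifsplit; lia.
case: (ltnP k (j + m)) => c5.
  have -> : sk k (j.+1 + m) = j.+1 + m by rewrite /sk; ifsplit; lia.
  rewrite (LG _ j m) // -!catA /=.
  rewrite (shift_Dn n k j.+1 m); [|side..].
  rewrite (CW_mid_gt n k.+1 j); [|side..].
  rewrite (shift_Up n k j.+1 m); [|side..].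
  rewrite (rr n k.+1); [|side..]. by rewrite (cats0 (Up _ _)).
case: (eqVneq k (j + m)) => c6.
  case: m hm c5 c4 c6 => [|m] hm c5 c4 c6; first lia.
  have ek : k = j.+1 + m by lia. clear c6 c5. subst k.
  have -> : sk (j.+1 + m) (j.+1 + m.+1) = j.+1 + m by rewrite /sk; ifsplit; lia.
  rewrite (LG _ j m.+1) // (LG _ j m) //.
  rewrite [Dn _ m.+1]/= Up_snoc -!catA /=.
  rewrite (rr n (j.+1 + m)); [|side..]. rewrite (rr n (j.+1 + m)); [|side..]. by rewrite (cats0 (Up _ _)).
case: (eqVneq k (j + m).+1) => c7.
  have ek : k = j.+1 + m by lia. clear c7 c6 c5. subst k.
  have -> : sk (j.+1 + m) (j.+1 + m) = j.+1 + m.+1 by rewrite /sk; ifsplit; lia.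
  rewrite (LG _ j m) // (LG _ j m.+1) //.
  by rewrite [Dn _ m.+1]/= Up_snoc -!catA /=.
have -> : sk k (j.+1 + m) = j.+1 + m by rewrite /sk; ifsplit; lia.
apply: CW_conj => //. rewrite (LG _ j m) //.
move=> w; rewrite -!catA.
rewrite (CW_Dn n k j.+1 m); [|side..].
rewrite (CW_mid_gt n k j); [|side..].
by rewrite (CW_Up n k j.+1 m); [|side..].
Qed.

Lemma lam_step n k i j : 1 <= k <= n - 1 -> 1 <= i <= n -> 1 <= j <= n -> i != j ->
  tvb_eq n (R k :: lam i j ++ [:: R k]) (lam (sk k i) (sk k j)).
Proof.
move=> hk hi hj hij.
case: (ltngtP i j) => c.
- have e : j = i.+1 + (j - i.+1) by lia. rewrite e. apply: step_lt; lia.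
- have e : i = j.+1 + (i - j.+1) by lia. rewrite e. apply: step_gt; lia.
- by move: hij; rewrite c eqxx.
Qed.

Lemma ga_step n k i : 1 <= k <= n - 1 -> 1 <= i <= n ->
  tvb_eq n (R k :: ga i ++ [:: R k]) (ga (sk k i)).
Proof.
move=> hk hi.
case: (eqVneq i k) => c1.
  subst i. have -> : sk k k = k.+1 by rewrite /sk; ifsplit; lia.
  have H := rel_w n _ _ [:: R k] (R_rg hk).
  rewrite /= in H. rewrite /= H. by rewrite (rr n k); [|side..].
case: (eqVneq i k.+1) => c2.
  subst i. have -> : sk k k.+1 = k by rewrite /sk; ifsplit; lia.
  have H := rel_w n _ _ [::] (R_rg hk).
  rewrite /= in H. rewrite /= -H. by rewrite (rr n k); [|side..].
have -> : sk k i = i by rewrite /sk; ifsplit; lia.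
have H := rel_w n _ _ [::] (R_gr_comm hk hi c1 c2).
rewrite /= in H. rewrite /= H. by rewrite (rr n k); [|side..].
Qed.

Lemma rb_any n k b w : 1 <= k <= n - 1 -> tvb_eq n ((Rh k, b) :: w) (R k :: w).
Proof. move=> hk. case: b => //. exact: riR. Qed.

Lemma lp_rh n k b : letter_perm n (Rh k, b) = tr n k.
Proof. rewrite /letter_perm /=. case: b => //. exact: tr_inv. Qed.

Lemma conj_gen n (X : nat -> nat -> word) (P : nat -> nat -> bool) :
  (forall k i j, 1 <= k <= n - 1 -> P i j -> tvb_eq n (R k :: X i j ++ [:: R k]) (X (sk k i) (sk k j))) ->
  (forall k i j, 1 <= k <= n - 1 -> P i j -> P (sk k i) (sk k j)) ->
  (forall i j, P i j -> 1 <= i <= n /\ 1 <= j <= n) ->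
  forall a, rho_word n a -> forall i j, P i j ->
  tvb_eq n (winv a ++ X i j ++ a) (X (actn (phiP n a) i) (actn (phiP n a) j)).
Proof.
move=> Hs HP Hr. elim=> [|[g b] a IH] /=.
  move=> _ i j hij. have [hi hj] := Hr i j hij. by rewrite !actn1 // cats0.
case: g => // k /andP [hk0 ha] i j hij.
have hk : 1 <= k <= n - 1 := hk0.
have hk1 : 1 <= k < n by lia.
have [hi hj] := Hr i j hij.
rewrite winv_cons -!catA /= lp_rh.
rewrite (rb_any n k (~~ b)) // (rb_any n k b) //.
rewrite !actnM // (actn_tr n k i hk1 hi) (actn_tr n k j hk1 hj).
have -> : R k :: X i j ++ R k :: a = (R k :: X i j ++ [:: R k]) ++ a by rewrite /= -catA.
rewrite (Hs k i j hk hij).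
exact: (IH ha _ _ (HP k i j hk hij)).
Qed.


Lemma winv_cancel n a : tvb_eq n (winv a ++ a) [::].
Proof.
elim: a => [|[x b] a IH] //=.
rewrite winv_cons -catA /=.
have H := canc n x (~~ b) a. rewrite negbK in H. by rewrite H.
Qed.

Lemma wf_winv n a : rho_word n a -> wf n (winv a).
Proof.
elim: a => [|[[k|k|k] b] a IH] //= /andP [h1 h2].
rewrite winv_cons /wf all_cat. apply/andP; split; first exact: IH.
by rewrite /= andbT.
Qed.

Theorem mainTheorem3 (n : nat) (hn : 2 <= n) :
  (* phi_P is a well-defined homomorphism TVB_n -> S_n *)
  (forall w1 w2 : word, wf n w1 -> wf n w2 -> tvb_eq n w1 w2 -> phiP n w1 = phiP n w2) /\
  (forall w1 w2 : word, phiP n (w1 ++ w2) = (phiP n w1 * phiP n w2)%g) /\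
  (* <rho_1,...,rho_{n-1}> is isomorphic to S_n via rho_i |-> (i,i+1):
     injectivity ... *)
  (forall a1 a2 : word, rho_word n a1 -> rho_word n a2 ->
     phiP n a1 = phiP n a2 -> tvb_eq n a1 a2) /\
  (* ... and surjectivity *)
  (forall s : 'S_n, exists a : word, rho_word n a /\ phiP n a = s) /\
  (* TVB_n = TVP_n <rho> with TVP_n normal and TVP_n /\ <rho> = 1 *)
  (forall w p : word, wf n w -> wf n p -> phiP n p = 1%g ->
     phiP n (winv w ++ p ++ w) = 1%g) /\
  (forall a : word, rho_word n a -> phiP n a = 1%g -> tvb_eq n a [::]) /\
  (forall w : word, wf n w -> exists p a : word,
     [/\ wf n p, phiP n p = 1%g, rho_word n a & tvb_eq n w (p ++ a)]) /\
  (* the conjugation action permutes indices *)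
  (forall (a : word) (i j : nat), rho_word n a -> 1 <= i <= n -> 1 <= j <= n -> i != j ->
     tvb_eq n (winv a ++ lam i j ++ a)
              (lam (actn (phiP n a) i) (actn (phiP n a) j))) /\
  (forall (a : word) (i : nat), rho_word n a -> 1 <= i <= n ->
     tvb_eq n (winv a ++ ga i ++ a) (ga (actn (phiP n a) i))).

Proof.
have hn1 : 1 <= n by lia.
split; first by move=> w1 w2 _ _; exact: phiP_eq.
split; first exact: phiP_cat.
split; first exact: rho_inj.
split; first exact: rho_surj.
split.
  move=> w p _ _ hp. by rewrite !phiP_cat phiP_winv hp mul1g mulVg.
split.
  move=> a ha hp. exact: (rho_inj n hn1 a [::] ha isT hp).
split.
  move=> w hw. have [a [ha pa]] := rho_surj n (phiP n w).
  exists (w ++ winv a), a; split => //.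
  - rewrite /wf all_cat; apply/andP; split; [exact: hw | exact: (wf_winv n a ha)].
  - by rewrite phiP_cat phiP_winv pa mulgV.
  - by rewrite -catA winv_cancel cats0.
split.
  move=> a i j ha hi hj hij.
  apply: (conj_gen n lam (fun i j => [&& 1 <= i <= n, 1 <= j <= n & i != j])) => //.
  - move=> k i' j' hk /and3P [hi' hj' hij']. exact: lam_step.
  - move=> k i' j' hk /and3P [hi' hj' hij']. apply/and3P; rewrite /sk; split; ifsplit; lia.
  - move=> i' j' /and3P [hi' hj' _]. by split.
  - by rewrite hi hj hij.
move=> a i ha hi.
apply: (conj_gen n (fun i _ => ga i) (fun i j => (1 <= i <= n) && (1 <= j <= n)) _ _ _ a ha i i) => //.
- move=> k i' j' hk /andP [hi' hj']. exact: ga_step.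
- move=> k i' j' hk /andP [hi' hj']. apply/andP; rewrite /sk; split; ifsplit; lia.
- move=> i' j' /andP [hi' hj']. by split.
- by rewrite hi.
Qed.
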